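(* Let an explicit non-confluent DJ-irreducible Runge--Kutta method $(A,b)$ be given such that at least one entry of the matrix $A$ or of the vector $b$ is negative. Then there exist nonnegative initial data and a choice of nonnegative functions $q_k$ such that the numerical solution of $$u_k'(t)=q_k(u(t),t)\,\frac{u_{k-1}(t)-u_k(t)}{\Delta x},\quad k=1,\dots,N,\qquad u_0:=u_N,$$ obtained with the method includes a negative value. Consequently $\gamma(A,b)=0$.
   Context: An $m$-stage explicit Runge--Kutta method has strictly lower-triangular Butcher matrix $A=(a_{ij})\in\mathbb{R}^{m\times m}$, weight vector $b\in\mathbb{R}^m$ and nodes $c_i=\sum_ja_{ij}$; non-confluent means the $c_i$ are pairwise distinct. It is DJ-reducible if there is a nonempty set $S\subseteq\{1,\dots,m\}$ of stage indices with $b_j=0$ for all $j\in S$ and $a_{ij}=0$ for all $i\notin S$, $j\in S$ (i.e. the stages in $S$ do not affect the result); otherwise DJ-irreducible. Applied to the ODE system with step $\Delta t$: $y^i_k=u^n_k+\sum_{j<i}a_{ij}\xi^j_k(y^j_{k-1}-y^j_k)$, $u^{n+1}_k=u^n_k+\sum_ib_i\xi^i_k(y^i_{k-1}-y^i_k)$, with $\xi^j_k=\frac{\Delta t}{\Delta x}q_k(y^j,t_n+c_j\Delta t)$ and periodic indices. Treating the $\xi^j_\ell$ as independent variables on the grid $\ell\in\mathbb{Z}$, $u^{n+1}_k=\sum_{i=0}^mP_i(\xi)u^n_{k-i}$ for polynomials $P_i$ (independent of $k$) in the $m(m+1)/2$ variables $\xi^j_\ell$, $1\le j\le m$, $k-(m-j)\le\ell\le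 k$. The step-size coefficient is $\gamma(A,b)=\sup\{\delta\ge0:P_i(\xi)\ge0$ for all $0\le i\le m$, all $\xi\in[0,\delta]^{m(m+1)/2}\}$ (or $0$ if the set is empty). *)

(* Defs.v *)
From HB Require Import structures.
From mathcomp Require Import all_boot all_order all_algebra.
From mathcomp Require Import all_classical all_reals ereal.
Set Implicit Arguments. Unset Strict Implicit. Unset Printing Implicit Defensive.
Import Order.TTheory GRing.Theory Num.Theory.
Local Open Scope ring_scope.

(* Stage indices are 0-based: stage i of the paper is stage i-1 here. *)
Section RK.
Variables (R : realType) (m : nat).

Definition Aent (A : 'M[R]_m) (i j : nat) : R :=
  match @insub _ (fun x => x < m)%N _ i, @insub _ (fun x => x < m)%N _ j with
  | Some i', Some j' => A i' j'
  | _, _ => 0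
  end.
Definition bent (b : 'rV[R]_m) (i : nat) : R :=
  match @insub _ (fun x => x < m)%N 'I_m i with
  | Some i' => b 0 i'
  | None => 0
  end.

Definition explicit_RK (A : 'M[R]_m) : Prop :=
  forall i j : 'I_m, (i <= j)%N -> A i j = 0.

Definition node (A : 'M[R]_m) (i : 'I_m) : R := \sum_(j < m) A i j.

Definition non_confluent (A : 'M[R]_m) : Prop := injective (node A).

Definition DJ_reducible (A : 'M[R]_m) (b : 'rV[R]_m) : Prop :=
  exists S : {set 'I_m}, S != finset.set0 /\
    (forall j, j \in S -> b 0 j = 0) /\
    (forall i j, i \notin S -> j \in S -> A i j = 0).

Definition DJ_irreducible A b : Prop := ~ DJ_reducible A b.

Definition has_negative_coef (A : 'M[R]_m) (b : 'rV[R]_m) : Prop :=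
  (exists i j, A i j < 0) \/ (exists j, b 0 j < 0).

(* grid 'I_N (k = 1..N of the paper with u_0 := u_N); the periodic left
   neighbour of k is ord_pred N k.  q k y t is q_k(y,t).                *)
Variable N : nat.
Notation vec := ('I_N -> R).

Section Step.
Variables (A : 'M[R]_m) (b : 'rV[R]_m) (dt dx tn : R)
          (q : 'I_N -> vec -> R -> R) (u : vec).

Definition cnat (j : nat) : R := \sum_(l < m) Aent A j l.

Definition xi (y : vec) (j : nat) (k : 'I_N) : R :=
  dt / dx * q k y (tn + cnat j * dt).

Fixpoint stages (n : nat) : seq vec :=
  match n with
  | 0 => [::]
  | n'.+1 =>
      let s := stages n' in
      rcons s (fun k => u k + \sum_(j < n')
        Aent A n' j * xi (nth u s j) j k * (nth u s j (ord_pred k) - nth u s j k))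
  end.

Definition stage (i : nat) : vec := nth u (stages m) i.

Definition rk_step : vec := fun k =>
  u k + \sum_(i < m) bent b i * xi (stage i) i k * (stage i (ord_pred k) - stage i k).
End Step.

Fixpoint rk_sol A b dt dx q (u0 : vec) (n : nat) : vec :=
  match n with
  | 0 => u0
  | n'.+1 => rk_step A b dt dx (n'%:R * dt) q (rk_sol A b dt dx q u0 n')
  end.

End RK.

Section Gamma.
Variables (R : realType) (m : nat) (A : 'M[R]_m) (b : 'rV[R]_m).
Local Open Scope ring_scope.

(* the xi^j_l are independent variables on the grid l in Z:
   xiv j l, stage j (0-based), grid point l : int.  Linear scheme
   y^i_k = u_k + sum_{j<i} a_ij xi^j_k (y^j_(k-1) - y^j_k). *)
Fixpoint zstages (xiv : nat -> int -> R) (u : int -> R) (n : nat)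
  : seq (int -> R) :=
  match n with
  | 0 => [::]
  | n'.+1 =>
      let s := zstages xiv u n' in
      rcons s (fun k => u k + \sum_(j < n')
        Aent A n' j * xiv j k * (nth u s j (k - 1) - nth u s j k))
  end.

Definition zstep (xiv : nat -> int -> R) (u : int -> R) : int -> R :=
  fun k => let Y i := nth u (zstages xiv u m) i in
  u k + \sum_(i < m) bent b i * xiv i k * (Y i (k - 1) - Y i k).

(* P_i(xi) = coefficient of u_{k-i} in u^{n+1}_k (computed at k = 0,
   the P_i being independent of k): apply the step to the unit vector
   supported at -i. *)
Definition Pcoef (i : nat) (xiv : nat -> int -> R) : R :=
  zstep xiv (fun l => if l == - (i%:Z) then 1 else 0) 0.

(* delta admissible: P_i(xi) >= 0 for all 0 <= i <= m and all xi with the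
   m(m+1)/2 variables xi^j_l (0-based j < m, -(m-1-j) <= l <= 0) in [0,delta] *)
Definition gamma_admissible (delta : R) : Prop :=
  0 <= delta /\
  forall xiv : nat -> int -> R,
    (forall (j : nat) (l : int), (j < m)%N ->
        - ((m - 1 - j)%N%:Z) <= l <= 0 -> 0 <= xiv j l <= delta) ->
    forall i : nat, (i <= m)%N -> 0 <= Pcoef i xiv.

Local Open Scope classical_set_scope.
Definition gamma : \bar R :=
  if `[< gamma_admissible = set0 >] then 0%E
  else ereal_sup [set (d%:E)%E | d in gamma_admissible].
End Gamma.

(* Main.v *)
Require Import Defs.
From HB Require Import structures.
From mathcomp Require Import all_boot all_order all_algebra.
From mathcomp Require Import all_classical all_reals ereal.
From mathcomp Require Import zify ring lra.
Set Implicit Arguments. Unset Strict Implicit. Unset Printing Implicit Defensive.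
Import Order.TTheory GRing.Theory Num.Theory.
Local Open Scope ring_scope.

Section Gen.
Variables (R : realType) (m : nat) (A : 'M[R]_m) (b : 'rV[R]_m).

Lemma AentE (i j : 'I_m) : Aent A i j = A i j.
Proof. by rewrite /Aent !valK. Qed.

Lemma bentE (i : 'I_m) : bent b i = b 0 i.
Proof. by rewrite /bent valK. Qed.

Variables (G : eqType) (pr : G -> G) (u : G -> R) (X : nat -> G -> R).

Fixpoint gst (n : nat) : seq (G -> R) :=
  match n with
  | 0 => [::]
  | n'.+1 =>
      let s := gst n' in
      rcons s (fun k => u k + \sum_(j < n')
        Aent A n' j * X j k * (nth u s j (pr k) - nth u s j k))
  end.

Lemma gst_size n : size (gst n) = n.
Proof. by elim: n => //= n IH; rewrite size_rcons IH. Qed.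

Lemma nth_gst n s : (s < n)%N -> nth u (gst n) s = nth u (gst s.+1) s.
Proof.
elim: n => // n IH; rewrite ltnS leq_eqVlt => /orP[/eqP->//|lt].
by rewrite /= nth_rcons gst_size lt IH.
Qed.

Definition Y s := nth u (gst m) s.

Lemma Yrec s k : (s < m)%N ->
  Y s k = u k + \sum_(j < s) Aent A s j * X j k * (Y j (pr k) - Y j k).
Proof.
move=> sm; rewrite /Y nth_gst // /= nth_rcons gst_size ltnn eqxx /=.
congr (_ + _); apply: eq_bigr => j _.
have jm : (j < m)%N by apply: ltn_trans sm.
by rewrite (nth_gst (ltn_ord j)) (nth_gst jm).
Qed.

Definition gout k := u k + \sum_(i < m) bent b i * X i k * (Y i (pr k) - Y i k).

Fixpoint PP (c : nat -> nat) (t : nat) : R :=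
  match t with 0 => 1 | t'.+1 => Aent A (c t'.+1) (c t') * PP c t' end.

Variables (r : nat) (c : nat -> nat) (g : nat -> G) (eps : R).
Hypothesis cinc : forall t, (t < r)%N -> (c t < c t.+1)%N.
Hypothesis crm : (c r < m)%N.
Hypothesis Hpr : forall t, (t <= r)%N -> pr (g t.+1) = g t.
Hypothesis Hg : forall t t', (t <= r.+1)%N -> (t' <= r.+1)%N -> g t = g t' -> t = t'.
Hypothesis Hu0 : u (g 0) = 1.
Hypothesis Hu : forall t, (t <= r)%N -> u (g t.+1) = 0.
Hypothesis HX1 : forall t, (t <= r)%N -> X (c t) (g t.+1) = eps.
Hypothesis HX0 : forall j k, (j < m)%N ->
  (forall t, (t <= r)%N -> k = g t.+1 -> j = c t -> False) -> X j k = 0.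

Definition W t := eps ^+ t * PP c t.

Lemma cmono t t' : (t <= t')%N -> (t' <= r)%N -> (c t <= c t')%N.
Proof.
move=> le; elim: t' le => [|t' IH]; first by rewrite leqn0 => /eqP->.
rewrite leq_eqVlt => /orP[/eqP->//|lt] le'.
apply: leq_trans (IH lt (ltnW le')) (ltnW (cinc le')).
Qed.

Lemma clt t : (t <= r)%N -> (c t < m)%N.
Proof. by move=> le; apply: leq_ltn_trans (cmono le (leqnn r)) crm. Qed.

Lemma Yclaim s : (s < m)%N ->
  (forall t, (t <= r)%N -> Y s (g t.+1) =
      if (c t < s)%N then Aent A s (c t) * eps * W t else 0) /\
  Y s (g 0) = 1.
Proof.
elim/ltn_ind: s => s IH sm.
have C : forall t, (t <= r)%N -> (c t < s)%N -> Y (c t) (g t) = W t.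
  move=> [|t] tr cs.
    by rewrite (proj2 (IH _ cs (ltn_trans cs sm))) /W expr0 mul1r.
  have [IH1 _] := IH _ cs (ltn_trans cs sm).
  rewrite IH1 ?(ltnW tr) // cinc // /W /=.
  by rewrite exprS; ring.
split.
  move=> t tr; rewrite Yrec // Hu // add0r.
  case: ifP => cs.
    rewrite (bigD1 (Ordinal cs)) //= big1 ?addr0.
      rewrite HX1 // Hpr // C // (proj1 (IH _ cs (ltn_trans cs sm))) // ltnn subr0.
      by rewrite mulrA.
    move=> j /eqP nj; rewrite HX0 ?mulr0 ?mul0r //.
      by apply: ltn_trans (ltn_ord j) sm.
    move=> t' t'r e je; apply: nj; apply: val_inj => /=.
    have := Hg (t:=t'.+1) (t':=t.+1); rewrite ltnS t'r ltnS tr e => /(_ isT isT erefl) [tt].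
    by rewrite je tt.
  rewrite big1 // => j _; rewrite HX0 ?mulr0 ?mul0r //.
    by apply: ltn_trans (ltn_ord j) sm.
  move=> t' t'r e je.
  have tt : t' = t by have := Hg (t:=t'.+1) (t':=t.+1); rewrite ltnS t'r ltnS tr e => /(_ isT isT erefl) [].
  by move: cs; rewrite -tt -je (ltn_ord j).
rewrite Yrec // Hu0 big1 ?addr0 // => j _; rewrite HX0 ?mulr0 ?mul0r //.
  by apply: ltn_trans (ltn_ord j) sm.
by move=> t' t'r e _; have := Hg (t:=0) (t':=t'.+1); rewrite e ltnS t'r => /(_ isT isT erefl).
Qed.

Lemma Ydiag t : (t <= r)%N -> Y (c t) (g t) = W t.
Proof.
case: t => [|t] tr.
  by rewrite (proj2 (Yclaim (clt tr))) /W expr0 mul1r.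
rewrite (proj1 (Yclaim (clt tr))) ?(ltnW tr) // cinc // /W /=.
by rewrite exprS; ring.
Qed.

Lemma gout_val : gout (g r.+1) = bent b (c r) * eps * W r.
Proof.
rewrite /gout Hu // add0r (bigD1 (Ordinal crm)) //= big1 ?addr0.
  rewrite HX1 // Hpr // (proj1 (Yclaim crm)) // ltnn subr0 Ydiag //.
move=> j /eqP nj; rewrite HX0 ?mulr0 ?mul0r //.
move=> t' t'r e je; apply: nj; apply: val_inj => /=.
have := Hg (t:=t'.+1) (t':=r.+1); rewrite ltnS t'r ltnS leqnn -e => /(_ isT isT erefl) [tt].
by rewrite je tt.
Qed.

End Gen.

Section Comb.
Variables (R : realType) (m : nat) (A : 'M[R]_m) (b : 'rV[R]_m).

Definition cpath r (c : nat -> nat) :=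
  (forall t, (t < r)%N -> (c t < c t.+1)%N) /\ (c r < m)%N.

Definition reach (i : nat) := exists r c, c 0 = i /\ cpath r c /\
  bent b (c r) * PP A c r != 0.

Definition prep (j : nat) (c : nat -> nat) : nat -> nat :=
  fun t => if t is t'.+1 then c t' else j.

Lemma PP_prep j c t : PP A (prep j c) t.+1 = PP A c t * Aent A (c 0) j.
Proof.
elim: t => [|t IH]; first by rewrite /= mul1r mulr1.
change (Aent A (c t.+1) (c t) * PP A (prep j c) t.+1 = PP A c t.+1 * Aent A (c 0) j).
by rewrite IH /= mulrA.
Qed.

Lemma cpath_prep j r c : (j < c 0)%N -> cpath r c -> cpath r.+1 (prep j c).
Proof. by move=> jc [h1 h2]; split => // -[|t] //= /h1. Qed.

Lemma all_reach : explicit_RK A -> DJ_irreducible A b ->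
  forall i : 'I_m, reach i.
Proof.
move=> ex irr i; apply: contrapT => nri; apply: irr.
exists [set j : 'I_m | ~~ `[< reach j >]]; split.
  by apply/set0Pn; exists i; rewrite inE; apply/negP => /asboolP.
split.
  move=> j; rewrite inE => /negP nr; apply: contrapT => bj; apply: nr.
  apply/asboolP; exists 0%N, (fun _ => val j); split => //; split; first by rewrite /cpath; split=> [t|]; [by [] | exact: ltn_ord].
  rewrite /= mulr1 bentE; by apply/eqP.
move=> i' j; rewrite !inE negbK => /asboolP [r [c [c0 [cp nz]]]] /negP nr.
apply: contrapT => aij; apply: nr; apply/asboolP.
have ji : (j < i')%N.
  by rewrite ltnNge; apply/negP => le; apply: aij; apply: ex.
exists r.+1, (prep j c); split => //; split; first by apply: cpath_prep => //; rewrite c0.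
rewrite PP_prep /= c0 AentE mulrA mulf_neq0 //; by apply/eqP.
Qed.

Lemma comb : explicit_RK A -> DJ_irreducible A b -> has_negative_coef A b ->
  exists r c, cpath r c /\ bent b (c r) * PP A c r < 0.
Proof.
move=> ex irr [[i [j aij]]|[j bj]]; last first.
  exists 0%N, (fun _ => val j); split; first by rewrite /cpath; split=> [t|]; [by [] | exact: ltn_ord].
  by rewrite /= mulr1 bentE.
have ji : (j < i)%N.
  rewrite ltnNge; apply/negP => le; move: aij; rewrite ex //; by rewrite ltxx.
have [r [c [c0 [cp nz]]]] := all_reach ex irr i.
have [neg|pos] := ltrP (bent b (c r) * PP A c r) 0.
  by exists r, c.
exists r.+1, (prep j c); split; first by apply: cpath_prep => //; rewrite c0.
have pp : 0 < bent b (c r) * PP A c r by rewrite lt_def nz pos.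
by rewrite PP_prep /= c0 AentE mulrA pmulr_rlt0.
Qed.
End Comb.

Section Main.
Variables (R : realType) (m : nat) (A : 'M[R]_m) (b : 'rV[R]_m).

Lemma cpath_ge r c : cpath m r c -> forall t, (t <= r)%N -> (t <= c t)%N.
Proof.
move=> [h _]; elim => [|t IH] // tr.
by apply: leq_ltn_trans (IH (ltnW tr)) (h _ tr).
Qed.

Lemma cnatE (j : 'I_m) : cnat A j = node A j.
Proof. by rewrite /cnat /node; apply: eq_bigr => l _; rewrite AentE. Qed.

Lemma stages_gst N dt dx tn (q : 'I_N -> ('I_N -> R) -> R -> R) u n :
  (forall k y y' t, q k y t = q k y' t) ->
  stages A dt dx tn q u n = gst A (@ord_pred N) u (fun j k => xi A dt dx tn q u j k) n.
Proof.
move=> Hq; elim: n => //= n ->; congr rcons; apply: funext => k.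
congr (_ + _); apply: eq_bigr => j _; by rewrite /xi (Hq k _ u).
Qed.

Lemma zstages_gst xiv u n : zstages A xiv u n = gst A (fun k : int => k - 1) u xiv n.
Proof. by elim: n => //= n ->. Qed.

Lemma part1 r c : cpath m r c -> bent b (c r) * PP A c r < 0 -> non_confluent A ->
  exists (N : nat) (dt dx : R) (q : 'I_N -> ('I_N -> R) -> R -> R)
          (u0 : 'I_N -> R),
      (0 < N)%N /\ 0 < dt /\ 0 < dx /\
      (forall k y t, 0 <= q k y t) /\
      (forall k, 0 <= u0 k) /\
      exists (n : nat) (k : 'I_N), rk_sol A b dt dx q u0 n k < 0.
Proof.
move=> cp neg nc; have [cinc crm] := cp.
pose g (t : nat) : 'I_(r.+2) := inord t.
pose q (k : 'I_r.+2) (y : 'I_r.+2 -> R) (tau : R) : R :=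
  if [exists t : 'I_r.+1, (k == g t.+1) && (tau == cnat A (c t))] then 1 else 0.
pose u0 (k : 'I_r.+2) : R := if k == g 0%N then 1 else 0.
exists r.+2, 1, 1, q, u0; split => //; split => //; split => //.
split; first by move=> k y t; rewrite /q; case: ifP.
split; first by move=> k; rewrite /u0; case: ifP.
have Hg : forall t t', (t <= r.+1)%N -> (t' <= r.+1)%N -> g t = g t' -> t = t'.
  move=> t t' ht ht' /(congr1 val); rewrite /g /= !inordK //.
have clt : forall t, (t <= r)%N -> (c t < m)%N by move=> t; exact: (@clt m r c cinc crm).
exists 1%N, (g r.+1).
have Hq : forall k y y' t, q k y t = q k y' t by [].
rewrite /rk_sol /rk_step /stage stages_gst //.
set X := fun j k => xi A 1 1 (0%:R * 1) q u0 j k.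
have XE : forall j k, X j k = q k u0 (cnat A j).
  by move=> j k; rewrite /X /xi divr1 mul1r mul0r add0r mulr1.
rewrite [_ + _](_ : _ = gout A b (@ord_pred r.+2) u0 X (g r.+1)); last first.
  rewrite /gout /Y; congr (_ + _); apply: eq_bigr => i _; by rewrite /X /xi (Hq _ _ u0).
rewrite (@gout_val _ _ A b _ _ _ _ r c g 1) //.
- by rewrite /W expr1n mul1r mulr1.
- move=> t tr; apply: val_inj; rewrite /g /= !inordK ?ltnS ?(leq_trans tr) //.
  by rewrite addSn /= modnDr modn_small // ltnS (leq_trans tr).
- by rewrite /u0 eqxx.
- by move=> t tr; rewrite /u0; case: eqP => // /Hg; rewrite ltnS tr => /(_ isT isT).
- move=> t tr; rewrite XE /q; case: existsP => // -[]; exists (Ordinal (n:=r.+1) (m:=t) tr).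
  by rewrite !eqxx.
- move=> j k jm H; rewrite XE /q; case: existsP => // -[t /andP[/eqP kt /eqP ct]].
  exfalso; apply: (H t) => //; first by rewrite -ltnS.
  have ctm := clt _ (ltn_ord t : (t <= r)%N).
  have := nc (Ordinal jm) (Ordinal ctm); rewrite -!cnatE /= ct => /(_ erefl).
  by move/(congr1 val).
Qed.

Lemma part2 r c : cpath m r c -> bent b (c r) * PP A c r < 0 ->
  forall d, gamma_admissible A b d -> d <= 0.
Proof.
move=> cp neg d [d0 adm]; rewrite leNgt; apply/negP => dpos.
have [cinc crm] := cp.
pose g (t : nat) : int := t%:Z - (r.+1)%:Z.
pose xiv (j : nat) (l : int) : R :=
  if [exists t : 'I_r.+1, (l == g t.+1) && (j == c t)] then d else 0.
have rm : (r.+1 <= m)%N.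
  by apply: leq_ltn_trans crm; apply: (cpath_ge cp).
have H1 : forall (j : nat) (l : int), (j < m)%N -> - (m - 1 - j)%N%:Z <= l <= 0 -> 0 <= xiv j l <= d.
  move=> j l _ _; rewrite /xiv; case: ifP => _; by rewrite ?lexx ?d0.
have := adm xiv H1 r.+1 rm.
apply/negP; rewrite -ltNge.
rewrite /Pcoef /zstep zstages_gst.
have Hg : forall t t', (t <= r.+1)%N -> (t' <= r.+1)%N -> g t = g t' -> t = t'.
  by move=> t t' _ _; rewrite /g => /addIr /eqP; rewrite eqz_nat => /eqP.
have -> : (0 : int) = g r.+1 by rewrite /g subrr.
rewrite [_ + _](_ : _ = gout A b (fun k : int => k - 1)
   (fun l : int => if l == - (r.+1%:Z) then 1 else 0) xiv (g r.+1)) //.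
rewrite (@gout_val _ _ A b _ _ _ _ r c g d) //.
- rewrite /W.
  have e : bent b (c r) * d * (d ^+ r * PP A c r) = d ^+ r.+1 * (bent b (c r) * PP A c r).
    by rewrite exprS; ring.
  by rewrite e pmulr_rlt0 // exprn_gt0.
- by move=> t tr; rewrite /g; lia.
- by rewrite /g sub0r eqxx.
- by move=> t tr; rewrite /g; case: eqP => //; lia.
- move=> t tr; rewrite /xiv; case: existsP => // -[]; exists (Ordinal (n:=r.+1) (m:=t) tr).
  by rewrite !eqxx.
- move=> j k jm H; rewrite /xiv; case: existsP => // -[t /andP[/eqP kt /eqP ct]].
  by exfalso; apply: (H t) => //; rewrite -ltnS.
Qed.
End Main.

Unset Implicit Arguments.

Theorem theorem3 (R : realType) (m : nat) (A : 'M[R]_m) (b : 'rV[R]_m) :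
  explicit_RK A -> non_confluent A -> DJ_irreducible A b ->
  has_negative_coef A b ->
  (exists (N : nat) (dt dx : R) (q : 'I_N -> ('I_N -> R) -> R -> R)
          (u0 : 'I_N -> R),
      (0 < N)%N /\ 0 < dt /\ 0 < dx /\
      (forall k y t, 0 <= q k y t) /\
      (forall k, 0 <= u0 k) /\
      exists (n : nat) (k : 'I_N), rk_sol A b dt dx q u0 n k < 0)
  /\ gamma A b = 0%E.
Proof.
move=> ex nc irr neg.
have [r [c [cp pn]]] := comb ex irr neg.
split; first exact: part1 cp pn nc.
rewrite /gamma; case: ifPn => // /asboolPn H.
have [d ad] : exists d, gamma_admissible A b d.
  apply: contrapT => nex; apply: H; apply/seteqP; split => x //= hx.
  by apply: nex; exists x.
have d00 : d = 0 by apply/eqP; rewrite eq_le (part2 cp pn ad) (proj1 ad).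
rewrite (_ : [set (d%:E)%E | d in gamma_admissible A b]%classic = [set 0%:E]%classic) ?ereal_sup1 //.
apply/seteqP; split => x /=.
  case=> d' ad' <-; congr EFin; apply/eqP.
  by rewrite eq_le (part2 cp pn ad') (proj1 ad').
by move=> ->; exists 0 => //; rewrite -d00.
Qed.
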